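(* Let $G$ be a torsion-free group and let $S=\bigoplus_{g\in G}S_g$ be an epsilon-strongly $G$-graded ring with principal component $R=S_e$. Then $S$ is left (respectively right) artinian if and only if $R$ is left (respectively right) artinian and $S_g=\{0\}$ for all but finitely many $g\in G$.
   Context: All rings are associative with multiplicative identity $1\neq 0$. A ring $S$ is $G$-graded if $S=\bigoplus_{g\in G}S_g$ for additive subgroups $S_g$ with $S_gS_h\subseteq S_{gh}$ for all $g,h\in G$; $S_e$ ($e$ the neutral element) is the principal component. $S$ is epsilon-strongly $G$-graded if (a) $S_gS_{g^{-1}}S_g=S_g$ for all $g\in G$, and (b) for each $g\in G$ the ideal $S_gS_{g^{-1}}$ of $S_e$ has a multiplicative identity. *)

(* Defs.v *)
From HB Require Import structures.
From mathcomp Require Import all_boot all_order all_algebra.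
Set Implicit Arguments. Unset Strict Implicit. Unset Printing Implicit Defensive.
Import GRing.Theory.

Section Defs.
Variable G : groupType.
Variable S : nzRingType.
Local Open Scope ring_scope.

Definition torsion_free : Prop :=
  forall (g : G) (n : nat), (0 < n)%N -> (g ^+ n)%g = 1%g -> g = 1%g.

Definition add_subgroup (A : S -> Prop) : Prop :=
  A 0 /\ forall x y, A x -> A y -> A (x - y).

(* A B : the additive subgroup generated by products a b, i.e. finite sums *)
Definition prod2 (A B : S -> Prop) : S -> Prop := fun x =>
  exists l : seq (S * S),
    (forall p, p \in l -> A p.1 /\ B p.2) /\
    x = \sum_(p <- l) p.1 * p.2.

Definition prod3 (A B C : S -> Prop) : S -> Prop := fun x =>
  exists l : seq (S * S * S),
    (forall p, p \in l -> [/\ A p.1.1, B p.1.2 & C p.2]) /\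
    x = \sum_(p <- l) p.1.1 * p.1.2 * p.2.

Definition direct_sum (Sg : G -> S -> Prop) : Prop :=
  (forall x : S, exists (l : seq G) (f : G -> S),
      [/\ uniq l, forall g, Sg g (f g) & x = \sum_(g <- l) f g]) /\
  (forall (l : seq G) (f : G -> S), uniq l ->
      (forall g, g \in l -> Sg g (f g)) ->
      \sum_(g <- l) f g = 0 -> forall g, g \in l -> f g = 0).

Definition graded (Sg : G -> S -> Prop) : Prop :=
  [/\ forall g, add_subgroup (Sg g),
      direct_sum Sg &
      forall (g h : G) (x y : S), Sg g x -> Sg h y -> Sg (g * h)%g (x * y)].

Definition epsilon_strongly_graded (Sg : G -> S -> Prop) : Prop :=
  graded Sg /\
  forall g : G,
    (forall x, prod3 (Sg g) (Sg (g^-1)%g) (Sg g) x <-> Sg g x) /\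
    exists u, prod2 (Sg g) (Sg (g^-1)%g) u /\
      forall x, prod2 (Sg g) (Sg (g^-1)%g) x -> u * x = x /\ x * u = x.

(* left / right ideals of the subring P of S (P = fun _ => True for S itself) *)
Definition left_ideal_of (P I : S -> Prop) : Prop :=
  [/\ forall x, I x -> P x, I 0, (forall x y, I x -> I y -> I (x - y)) &
      forall r x, P r -> I x -> I (r * x)].

Definition right_ideal_of (P I : S -> Prop) : Prop :=
  [/\ forall x, I x -> P x, I 0, (forall x y, I x -> I y -> I (x - y)) &
      forall r x, P r -> I x -> I (x * r)].

Definition left_artinian_on (P : S -> Prop) : Prop :=
  forall I : nat -> S -> Prop,
    (forall n, left_ideal_of P (I n)) ->
    (forall n x, I n.+1 x -> I n x) ->
    exists N, forall n, (N <= n)%N -> forall x, I n x <-> I N x.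

Definition right_artinian_on (P : S -> Prop) : Prop :=
  forall I : nat -> S -> Prop,
    (forall n, right_ideal_of P (I n)) ->
    (forall n x, I n.+1 x -> I n x) ->
    exists N, forall n, (N <= n)%N -> forall x, I n x <-> I N x.

Definition left_artinian : Prop := left_artinian_on (fun _ => True).
Definition right_artinian : Prop := right_artinian_on (fun _ => True).

Definition finite_support (Sg : G -> S -> Prop) : Prop :=
  exists l : seq G, forall g, (exists x, Sg g x /\ x <> 0) -> g \in l.

End Defs.

(* Main.v *)
Require Import Defs.
From HB Require Import structures.
From mathcomp Require Import all_boot all_order all_algebra.
From mathcomp Require Import ring.
From Stdlib Require Import ClassicalEpsilon Classical.
Set Implicit Arguments. Unset Strict Implicit. Unset Printing Implicit Defensive.
Import GRing.Theory.
Local Open Scope ring_scope.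

Section Basics.
Variables (G : groupType) (S : nzRingType) (Sg : G -> S -> Prop).
Hypothesis Hgr : graded Sg.

Lemma Sg0 g : Sg g 0.
Proof. by case: Hgr => H _ _; case: (H g). Qed.

Lemma SgB g x y : Sg g x -> Sg g y -> Sg g (x - y).
Proof. by case: Hgr => H _ _; case: (H g) => _; apply. Qed.

Lemma SgN g x : Sg g x -> Sg g (- x).
Proof. by move=> hx; rewrite -sub0r; apply: SgB => //; apply: Sg0. Qed.

Lemma SgD g x y : Sg g x -> Sg g y -> Sg g (x + y).
Proof. by move=> hx hy; rewrite -[y]opprK; apply: SgB => //; apply: SgN. Qed.

Lemma SgM g h x y : Sg g x -> Sg h y -> Sg (g * h)%g (x * y).
Proof. by case: Hgr => _ _; apply. Qed.

Lemma Sg_sum (I : eqType) g (r : seq I) (F : I -> S) :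
  (forall i, i \in r -> Sg g (F i)) -> Sg g (\sum_(i <- r) F i).
Proof.
elim: r => [|a r IH] H; first by rewrite big_nil; apply: Sg0.
rewrite big_cons; apply: SgD; first by apply: H; rewrite inE eqxx.
by apply: IH => i ir; apply: H; rewrite inE ir orbT.
Qed.

Lemma Sg_eq g h x : g = h -> Sg g x -> Sg h x.
Proof. by move=> ->. Qed.

Lemma decomp x : exists l f, [/\ uniq l, forall g, Sg g (f g) & x = \sum_(g <- l) f g].
Proof. by case: Hgr => _ [H _] _; apply: H. Qed.

Lemma indep (l : seq G) (f : G -> S) : uniq l ->
  (forall g, g \in l -> Sg g (f g)) ->
  \sum_(g <- l) f g = 0 -> forall g, g \in l -> f g = 0.
Proof. by case: Hgr => _ [_ H] _; apply: H. Qed.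

Lemma sum_restrict (l L : seq G) (f : G -> S) : uniq l -> uniq L -> {subset l <= L} ->
  \sum_(g <- L) (if g \in l then f g else 0) = \sum_(g <- l) f g.
Proof.
move=> ul uL sub; rewrite -big_mkcond -big_filter; apply: perm_big.
apply: uniq_perm; first by apply: filter_uniq.
  by [].
by move=> g; rewrite mem_filter; case gl: (g \in l) => //=; rewrite (sub _ gl).
Qed.

Definition dec (x : S) : {p : seq G * (G -> S) |
   [/\ uniq p.1, forall g, Sg g (p.2 g) & x = \sum_(g <- p.1) p.2 g]}.
Proof.
apply: constructive_indefinite_description.
have [l [f [u H e]]] := decomp x.
by exists (l, f).
Defined.

Definition proj (h : G) (x : S) : S :=
  if h \in (sval (dec x)).1 then (sval (dec x)).2 h else 0.

Lemma projE x (l : seq G) (f : G -> S) h : uniq l -> (forall g, g \in l -> Sg g (f g)) ->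
  x = \sum_(g <- l) f g -> proj h x = if h \in l then f h else 0.
Proof.
move=> ul Hf ex; rewrite /proj; case: (dec x) => [[l' f']] /= [ul' Hf' ex'].
pose L := undup (l ++ l').
pose F g := (if g \in l then f g else 0) - (if g \in l' then f' g else 0).
have uL : uniq L by apply: undup_uniq.
have H0 : \sum_(g <- L) F g = 0.
  have s1 : {subset l <= L} by move=> g gl; rewrite mem_undup mem_cat gl.
  have s2 : {subset l' <= L} by move=> g gl; rewrite mem_undup mem_cat gl orbT.
  rewrite /F big_split /= sumrN (sum_restrict _ ul uL s1) (sum_restrict _ ul' uL s2).
  by rewrite -ex -ex' subrr.
have HF : forall g, g \in L -> Sg g (F g).
  move=> g _; rewrite /F; apply: SgB.
    by case: ifP => gl; [apply: Hf | apply: Sg0].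
  by case: ifP => _; [apply: Hf' | apply: Sg0].
have := indep uL HF H0 => Hz.
case hL: (h \in L).
  by move: (Hz h hL); rewrite /F => /eqP; rewrite subr_eq0 => /eqP ->.
move/negbT: hL; rewrite mem_undup mem_cat negb_or => /andP [/negbTE -> /negbTE ->].
by [].
Qed.

Lemma proj_Sg h x : Sg h (proj h x).
Proof.
rewrite /proj; case: (dec x) => [[l f]] /= [_ Hf _].
by case: ifP => _; [apply: Hf | apply: Sg0].
Qed.

Lemma proj_supp x : exists l : seq G,
  [/\ uniq l, forall h, h \notin l -> proj h x = 0 & x = \sum_(h <- l) proj h x].
Proof.
case: (dec x) => [[l f]] /= [ul Hf ex].
exists l; split => //.
  by move=> h hl; rewrite (projE h ul (fun g _ => Hf g) ex) (negbTE hl).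
rewrite {1}ex; apply: eq_big_seq => g gl.
by rewrite (projE g ul (fun g _ => Hf g) ex) gl.
Qed.

Lemma proj_sum_any x (L : seq G) : uniq L -> (forall h, h \notin L -> proj h x = 0) ->
  x = \sum_(h <- L) proj h x.
Proof.
move=> uL HL; have [l [ul Hl ex]] := proj_supp x.
pose l2 := [seq g <- l | g \in L].
have ul2 : uniq l2 by apply: filter_uniq.
have s2L : {subset l2 <= L} by move=> g; rewrite mem_filter => /andP [].
have s2l : {subset l2 <= l} by move=> g; rewrite mem_filter => /andP [].
have -> : \sum_(h <- L) proj h x = \sum_(h <- L) (if h \in l2 then proj h x else 0).
  apply: eq_big_seq => h hL; rewrite mem_filter hL /=.
  by case: ifP => // /negbT /Hl.
rewrite (sum_restrict _ ul2 uL s2L) {1}ex.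
rewrite -(sum_restrict (fun h => proj h x) ul2 ul s2l).
apply: eq_big_seq => g gl; rewrite mem_filter gl andbT.
by case: ifP => // /negbT /HL.
Qed.

Lemma proj_eq0 x : (forall h, proj h x = 0) -> x = 0.
Proof.
move=> H; have [l [_ _ ->]] := proj_supp x.
by rewrite big1_seq // => h _; apply: H.
Qed.

Lemma projD h x y : proj h (x + y) = proj h x + proj h y.
Proof.
have [lx [ux Hx ex]] := proj_supp x.
have [ly [uy Hy ey]] := proj_supp y.
pose L := undup (lx ++ ly).
have uL : uniq L by apply: undup_uniq.
pose F g := (if g \in lx then proj g x else 0) + (if g \in ly then proj g y else 0).
have eF : x + y = \sum_(g <- L) F g.
  have s1 : {subset lx <= L} by move=> g gl; rewrite mem_undup mem_cat gl.
  have s2 : {subset ly <= L} by move=> g gl; rewrite mem_undup mem_cat gl orbT.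
  by rewrite big_split /= (sum_restrict _ ux uL s1) (sum_restrict _ uy uL s2) -ex -ey.
have HF : forall g, g \in L -> Sg g (F g).
  by move=> g _; apply: SgD; case: ifP => _; (apply: proj_Sg || apply: Sg0).
rewrite (projE h uL HF eF) /F.
have Ex : (if h \in lx then proj h x else 0) = proj h x by case: ifP => // /negbT /Hx ->.
have Ey : (if h \in ly then proj h y else 0) = proj h y by case: ifP => // /negbT /Hy ->.
rewrite Ex Ey; case: ifP => // /negbT; rewrite mem_undup mem_cat negb_or => /andP [hx hy].
by rewrite (Hx _ hx) (Hy _ hy) addr0.
Qed.

Lemma proj0 h : proj h 0 = 0.
Proof. by apply: (@addrI _ (proj h 0)); rewrite -projD !addr0. Qed.

Lemma projN h x : proj h (- x) = - proj h x.
Proof. by apply: (@addrI _ (proj h x)); rewrite -projD !subrr proj0. Qed.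

Lemma projB h x y : proj h (x - y) = proj h x - proj h y.
Proof. by rewrite projD projN. Qed.

Lemma proj_sum (I : Type) h (r : seq I) (F : I -> S) :
  proj h (\sum_(i <- r) F i) = \sum_(i <- r) proj h (F i).
Proof.
elim: r => [|a r IH]; first by rewrite !big_nil proj0.
by rewrite !big_cons projD IH.
Qed.

Lemma proj_hom g x h : Sg g x -> proj h x = if h == g then x else 0.
Proof.
move=> hx; rewrite (@projE x [:: g] (fun _ => x)) ?inE //.
  by move=> g'; rewrite inE => /eqP ->.
by rewrite big_seq1.
Qed.

Lemma proj_mulr k x y h : Sg k y -> proj h (x * y) = proj (h * k^-1)%g x * y.
Proof.
move=> hy; have [l [ul Hl ex]] := proj_supp x.
pose L := [seq (g * k)%g | g <- l].
have inj : injective (fun g : G => (g * k)%g) by apply: mulIg.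
have uL : uniq L by rewrite map_inj_uniq.
pose F g := proj (g * k^-1)%g x * y.
have eF : x * y = \sum_(g <- L) F g.
  rewrite big_map {1}ex mulr_suml; apply: eq_bigr => g _.
  by rewrite /F mulgK.
have HF : forall g, g \in L -> Sg g (F g).
  move=> g _; rewrite /F; apply: (Sg_eq (mulgVK k g)); apply: SgM => //; apply: proj_Sg.
rewrite (projE h uL HF eF) /F.
have -> : (h \in L) = ((h * k^-1)%g \in l).
  by rewrite -[in RHS](mem_map inj) /= mulgVK.
by case: ifP => // /negbT /Hl ->; rewrite mul0r.
Qed.

Lemma proj_mull k x y h : Sg k y -> proj h (y * x) = y * proj (k^-1 * h)%g x.
Proof.
move=> hy; have [l [ul Hl ex]] := proj_supp x.
pose L := [seq (k * g)%g | g <- l].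
have inj : injective (fun g : G => (k * g)%g) by apply: mulgI.
have uL : uniq L by rewrite map_inj_uniq.
pose F g := y * proj (k^-1 * g)%g x.
have eF : y * x = \sum_(g <- L) F g.
  rewrite big_map {1}ex mulr_sumr; apply: eq_bigr => g _.
  by rewrite /F mulKg.
have HF : forall g, g \in L -> Sg g (F g).
  move=> g _; rewrite /F; apply: (Sg_eq (mulVKg k g)); apply: SgM => //; apply: proj_Sg.
rewrite (projE h uL HF eF) /F.
have -> : (h \in L) = ((k^-1 * h)%g \in l).
  by rewrite -[in RHS](mem_map inj) /= mulVKg.
by case: ifP => // /negbT /Hl ->; rewrite mulr0.
Qed.

Lemma one_Sg : Sg 1%g 1.
Proof.
set u := proj 1%g 1.
have Hs : forall g s, Sg g s -> s * u = s.
  move=> g s hs.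
  have := @proj_mull g 1 s g hs; rewrite mulr1 (proj_hom g hs) eqxx mulVg => <-.
  by [].
have Hx : forall x, x * u = x.
  move=> x; have [l [ul Hl ex]] := proj_supp x.
  transitivity (\sum_(h <- l) proj h x); last by rewrite -ex.
  rewrite {1}ex mulr_suml; apply: eq_bigr => g _.
  by apply: (Hs g); apply: proj_Sg.
have : u = 1 by rewrite -[u]mul1r Hx.
by move=> <-; apply: proj_Sg.
Qed.

End Basics.

Section Prod.
Variable S : nzRingType.

Lemma prod2_single (A B : S -> Prop) a b : A a -> B b -> prod2 A B (a * b).
Proof.
move=> ha hb; exists [:: (a, b)]; split; last by rewrite big_seq1.
by move=> p; rewrite inE => /eqP ->.
Qed.

Lemma prod2_0 (A B : S -> Prop) : prod2 A B 0.
Proof. by exists [::]; split => //; rewrite big_nil. Qed.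

Lemma prod2_add (A B : S -> Prop) x y : prod2 A B x -> prod2 A B y -> prod2 A B (x + y).
Proof.
move=> [l1 [H1 ->]] [l2 [H2 ->]]; exists (l1 ++ l2); split; last by rewrite big_cat.
by move=> p; rewrite mem_cat => /orP [/H1|/H2].
Qed.

Lemma prod2_mull (A B : S -> Prop) r x : (forall a, A a -> A (r * a)) ->
  prod2 A B x -> prod2 A B (r * x).
Proof.
move=> HA [l [H ->]]; exists [seq (r * p.1, p.2) | p <- l]; split.
  by move=> p /mapP [q ql ->] /=; have [h1 h2] := H q ql; split => //; apply: HA.
by rewrite big_map mulr_sumr; apply: eq_bigr => p _ /=; rewrite mulrA.
Qed.

Lemma prod2_mulr (A B : S -> Prop) r x : (forall b, B b -> B (b * r)) ->
  prod2 A B x -> prod2 A B (x * r).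
Proof.
move=> HB [l [H ->]]; exists [seq (p.1, p.2 * r) | p <- l]; split.
  by move=> p /mapP [q ql ->] /=; have [h1 h2] := H q ql; split => //; apply: HB.
by rewrite big_map mulr_suml; apply: eq_bigr => p _ /=; rewrite mulrA.
Qed.

Lemma prod2_ind (A B P : S -> Prop) : P 0 -> (forall x y, P x -> P y -> P (x + y)) ->
  (forall a b, A a -> B b -> P (a * b)) -> forall x, prod2 A B x -> P x.
Proof.
move=> P0 PD PM x [l [H ->]]; elim: l H => [|p l IH] H; first by rewrite big_nil.
rewrite big_cons; apply: PD.
  by have [] := H p (mem_head _ _); apply: PM.
by apply: IH => q ql; apply: H; rewrite inE ql orbT.
Qed.

End Prod.

Section Eps.
Variables (G : groupType) (S : nzRingType) (Sg : G -> S -> Prop).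
Hypothesis Heps : epsilon_strongly_graded Sg.

Lemma Hgr : graded Sg. Proof. by case: Heps. Qed.

Definition eps (g : G) : S :=
  sval (constructive_indefinite_description _ (proj2 (proj2 Heps g))).

Lemma eps_spec g : prod2 (Sg g) (Sg g^-1) (eps g) /\
   forall x, prod2 (Sg g) (Sg g^-1) x -> eps g * x = x /\ x * eps g = x.
Proof. by rewrite /eps; case: (constructive_indefinite_description _ _). Qed.

Lemma prod2_Sg g h x : prod2 (Sg g) (Sg h) x -> Sg (g * h)%g x.
Proof.
apply: (@prod2_ind _ (Sg g) (Sg h) (Sg (g * h)%g)); first exact: (Sg0 Hgr (g * h)%g).
  by move=> a b ha hb; exact: (SgD Hgr ha hb).
by move=> a b ha hb; exact: (SgM Hgr ha hb).
Qed.

Lemma eps_R g : Sg 1%g (eps g).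
Proof. by rewrite -(mulgV g); apply: prod2_Sg; case: (eps_spec g). Qed.

Lemma prod3_sg g x : Sg g x -> prod3 (Sg g) (Sg g^-1) (Sg g) x.
Proof. by case: (proj1 (proj2 Heps g) x). Qed.

Lemma epsL g s : Sg g s -> eps g * s = s.
Proof.
move=> /prod3_sg [l [H ->]]; rewrite mulr_sumr; apply: eq_big_seq => p pl.
have [h1 h2 h3] := H p pl.
rewrite !mulrA; congr (_ * _).
have := proj2 (eps_spec g) (p.1.1 * p.1.2) (prod2_single h1 h2).
by case; rewrite mulrA.
Qed.

Lemma epsR g s : Sg g s -> s * eps g^-1 = s.
Proof.
move=> /prod3_sg [l [H ->]]; rewrite mulr_suml; apply: eq_big_seq => p pl.
have [h1 h2 h3] := H p pl.
rewrite -!mulrA; congr (_ * _).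
have h3' : Sg (g^-1)^-1 p.2 by rewrite invgK.
have [_ e] := proj2 (eps_spec g^-1) (p.1.2 * p.2) (prod2_single h2 h3').
by rewrite mulrA e.
Qed.

Lemma eps_idem g : eps g * eps g = eps g.
Proof. by have [h1 h2] := eps_spec g; case: (h2 _ h1). Qed.

Lemma eps_central g r : Sg 1%g r -> r * eps g = eps g * r.
Proof.
move=> hr; have [h1 h2] := eps_spec g.
have p1 : prod2 (Sg g) (Sg g^-1) (r * eps g).
  apply: prod2_mull h1 => a ha; rewrite -[g]mul1g; exact: (SgM Hgr hr ha).
have p2 : prod2 (Sg g) (Sg g^-1) (eps g * r).
  apply: prod2_mulr h1 => b hb; rewrite -[(g^-1)%g]mulg1; exact: (SgM Hgr hb hr).
have [e1 _] := h2 _ p1; have [_ e2] := h2 _ p2.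
by rewrite -e1 mulrA e2.
Qed.

Lemma epsL_dec g : exists l : seq (S * S),
  (forall p, p \in l -> Sg g p.1 /\ Sg g^-1 p.2) /\ eps g = \sum_(p <- l) p.1 * p.2.
Proof. by case: (eps_spec g) => [[l H] _]; exists l. Qed.

Lemma Sg_nz_eps g x : Sg g x -> x <> 0 -> eps g^-1 <> 0.
Proof. by move=> hx nx e; apply: nx; rewrite -(epsR hx) e mulr0. Qed.

End Eps.

Lemma chain_mono (T : Type) (I : nat -> T -> Prop) :
  (forall n x, I n.+1 x -> I n x) -> forall m n x, (m <= n)%N -> I n x -> I m x.
Proof.
move=> H m n x /subnK <-; elim: (n - m)%N => [|k IH] //= hx.
by apply: IH; apply: H; rewrite addSn in hx.
Qed.

Section Dir.
Variables (G : groupType) (S : nzRingType) (Sg : G -> S -> Prop).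
Hypothesis Heps : epsilon_strongly_graded Sg.
Let Hg := Hgr Heps.
Local Notation R := (Sg 1%g).

Lemma ideal_add (P I : S -> Prop) x y : left_ideal_of P I -> I x -> I y -> I (x + y).
Proof.
move=> HI hx hy; have [_ I0 IB _] := HI; rewrite -[y]opprK -[- y]sub0r.
by apply: (IB) => //; apply: (IB).
Qed.

Lemma R_mul x y : R x -> R y -> R (x * y).
Proof. by move=> hx hy; rewrite -(mulg1 1%g); apply: (SgM Hg hx hy). Qed.

Lemma SI_cap (I : S -> Prop) : left_ideal_of R I ->
  forall x, R x -> prod2 (fun _ => True) I x -> I x.
Proof.
move=> HI x hx px; rewrite -(_ : proj Hg 1%g x = x); last first.
  by rewrite (proj_hom Hg 1%g hx) eqxx.
move: px; apply: (@prod2_ind _ _ _ (fun y => I (proj Hg 1%g y))).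
- by rewrite proj0; case: HI.
- by move=> a b ha hb; rewrite projD; apply: (ideal_add HI).
- move=> a b _ hb; have [sub _ _ IM] := HI.
  rewrite (proj_mulr Hg a 1%g (sub _ hb)) mul1g invg1.
  by apply: (IM) => //; apply: proj_Sg.
Qed.

Lemma prod2_mono (A B B' : S -> Prop) x : (forall y, B y -> B' y) -> prod2 A B x -> prod2 A B' x.
Proof.
move=> HB [l [H ->]]; exists l; split => // p pl.
by have [h1 h2] := H p pl; split => //; apply: HB.
Qed.

Lemma left_artinian_R : left_artinian S -> left_artinian_on R.
Proof.
move=> HS I HI Hd.
pose J n := prod2 (fun _ : S => True) (I n).
have HJ : forall n, left_ideal_of (fun _ => True) (J n).
  move=> n; split => //.
  - exact: prod2_0.
  - move=> x y hx hy; apply: prod2_add => //.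
    by rewrite -mulN1r; apply: prod2_mull.
  - by move=> r x _ hx; apply: prod2_mull.
have HJd : forall n x, J n.+1 x -> J n x by move=> n x; apply: prod2_mono; apply: Hd.
have [N HN] := HS J HJ HJd.
exists N => n hn x; split; first by apply: (chain_mono Hd).
move=> hx; have [sub _ _ _] := HI N.
apply: SI_cap => //; first by apply: sub.
by apply/(HN n hn); rewrite /J -[x]mul1r; apply: prod2_single.
Qed.

Fixpoint Mgen (D : seq S) (x : S) : Prop :=
  if D is d :: D' then exists r m, [/\ R r, Mgen D' m & x = r * d + m] else x = 0.

Lemma Mgen0 D : Mgen D 0.
Proof.
elim: D => [|d D IH] //=; exists 0, 0; split => //; last by rewrite mul0r addr0.
exact: (Sg0 Hg).
Qed.

Lemma MgenB D x y : Mgen D x -> Mgen D y -> Mgen D (x - y).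
Proof.
elim: D x y => [|d D IH] x y /=; first by move=> -> ->; rewrite subrr.
move=> [r [m [hr hm ->]]] [r' [m' [hr' hm' ->]]].
exists (r - r'), (m - m'); split; [exact: (SgB Hg) | exact: IH|].
by rewrite mulrBl opprD addrACA.
Qed.

Lemma MgenD D x y : Mgen D x -> Mgen D y -> Mgen D (x + y).
Proof.
move=> hx hy; rewrite -[y]opprK -[- y]sub0r.
by apply: MgenB => //; apply: MgenB => //; apply: Mgen0.
Qed.

Lemma MgenM D r x : R r -> Mgen D x -> Mgen D (r * x).
Proof.
elim: D x => [|d D IH] x hr /=; first by move=> ->; rewrite mulr0.
move=> [r1 [m [hr1 hm ->]]]; exists (r * r1), (r * m); split.
- exact: R_mul.
- exact: IH.
by rewrite mulrDr mulrA.
Qed.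

Lemma Mgen_catl D1 D2 x : Mgen D1 x -> Mgen (D1 ++ D2) x.
Proof.
elim: D1 x => [|d D IH] x /=; first by move=> ->; apply: Mgen0.
by move=> [r [m [hr hm ->]]]; exists r, m; split => //; apply: IH.
Qed.

Lemma Mgen_catr D1 D2 x : Mgen D2 x -> Mgen (D1 ++ D2) x.
Proof.
elim: D1 x => [|d D IH] x //= hx; exists 0, x; split => //.
- exact: (Sg0 Hg).
- exact: IH.
by rewrite mul0r add0r.
Qed.

Lemma Mgen_sum (I : eqType) D (r : seq I) (F : I -> S) :
  (forall i, i \in r -> Mgen D (F i)) -> Mgen D (\sum_(i <- r) F i).
Proof.
elim: r => [|a r IH] H; first by rewrite big_nil; apply: Mgen0.
rewrite big_cons; apply: MgenD; first by apply: H; rewrite inE eqxx.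
by apply: IH => i ir; apply: H; rewrite inE ir orbT.
Qed.

Definition rsub (N : S -> Prop) :=
  [/\ N 0, forall x y, N x -> N y -> N (x - y) & forall r x, R r -> N x -> N (r * x)].

Lemma rsub_add N x y : rsub N -> N x -> N y -> N (x + y).
Proof.
move=> HN hx hy; have [N0 NB _] := HN; rewrite -[y]opprK -[- y]sub0r.
by apply: (NB) => //; apply: (NB).
Qed.

Lemma dcc_Mgen : left_artinian_on R -> forall D (N : nat -> S -> Prop),
  (forall n, rsub (N n)) -> (forall n x, N n x -> Mgen D x) ->
  (forall n x, N n.+1 x -> N n x) ->
  exists K, forall n, (K <= n)%N -> forall x, N n x <-> N K x.
Proof.
move=> HR; elim=> [|d D IH] N HN HM Hd.
  exists 0%N => n _ x; split => [hx|hx].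
    by have := HM _ _ hx => /= ->; case: (HN 0%N).
  by have := HM _ _ hx => /= ->; case: (HN n).
pose A n x := N n x /\ Mgen D x.
have HA : forall n, rsub (A n).
  move=> n; have [N0 NB NM] := HN n; split.
  - by split => //; apply: Mgen0.
  - by move=> x y [h1 h2] [h3 h4]; split; [apply: (NB) | apply: MgenB].
  - by move=> r x hr [h1 h2]; split; [apply: (NM) | apply: MgenM].
have [K1 HK1] := IH A HA (fun n x hx => proj2 hx) (fun n x hx => conj (Hd _ _ (proj1 hx)) (proj2 hx)).
pose J n r := R r /\ exists m, Mgen D m /\ N n (r * d + m).
have HJ : forall n, left_ideal_of R (J n).
  move=> n; have [N0 NB NM] := HN n; split.
  - by move=> x [].
  - split; first exact: (Sg0 Hg).
    by exists 0; split; [apply: Mgen0 | rewrite mul0r addr0].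
  - move=> x y [hx [m [hm hxm]]] [hy [m' [hm' hym]]]; split; first exact: (SgB Hg).
    exists (m - m'); split; first exact: MgenB.
    by have := NB _ _ hxm hym; rewrite opprD addrACA mulrBl.
  - move=> r x hr [hx [m [hm hxm]]]; split; first exact: R_mul.
    exists (r * m); split; first exact: MgenM.
    by have := NM _ _ hr hxm; rewrite mulrDr mulrA.
have HJd : forall n x, J n.+1 x -> J n x.
  by move=> n x [hx [m [hm h]]]; split => //; exists m; split => //; apply: Hd.
have [K2 HK2] := HR J HJ HJd.
exists (maxn K1 K2) => n hn x; split; first by apply: (chain_mono Hd).
move=> hx; have := HM _ _ hx => /= [[r [m [hr hm ex]]]].
have hK2 : (K2 <= maxn K1 K2)%N by rewrite leq_maxr.
have hK1 : (K1 <= maxn K1 K2)%N by rewrite leq_maxl.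
have hJ : J n r.
  apply/(HK2 n (leq_trans hK2 hn)); apply/(HK2 _ hK2).
  by split => //; exists m; split => //; rewrite -ex.
case: hJ => _ [m' [hm' hn']].
have hK : N (maxn K1 K2) (r * d + m') by apply: (chain_mono Hd) hn'.
have hdiff : A (maxn K1 K2) (m - m').
  split; last exact: MgenB.
  have [_ NB _] := HN (maxn K1 K2).
  by have := NB _ _ hx hK; rewrite ex opprD addrACA subrr add0r.
have : A n (m - m').
  by apply/(HK1 n (leq_trans hK1 hn)); apply/(HK1 _ hK1).
case=> hA _; rewrite ex.
have -> : r * d + m = (m - m') + (r * d + m') by rewrite addrCA subrK.
by apply: rsub_add => //; apply: (HN).
Qed.

Lemma Mgen_snd (l : seq (S * S)) (c : S * S -> S) :
  (forall p, p \in l -> R (c p)) -> Mgen [seq p.2 | p <- l] (\sum_(p <- l) c p * p.2).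
Proof.
elim: l => [|p l IH] H /=; first by rewrite big_nil.
rewrite big_cons; exists (c p), (\sum_(q <- l) c q * q.2); split => //.
  by apply: H; rewrite inE eqxx.
by apply: IH => q ql; apply: H; rewrite inE ql orbT.
Qed.

Lemma Mgen_comp (L : seq G) : exists D, forall g, g \in L -> forall s, Sg g s -> Mgen D s.
Proof.
elim: L => [|g L [D HD]]; first by exists [::].
have [l [Hl e]] := epsL_dec Heps g^-1.
exists ([seq p.2 | p <- l] ++ D) => h; rewrite inE => /orP [/eqP -> s hs | hL s hs].
  apply: Mgen_catl; rewrite -(epsR Heps hs) e mulr_sumr.
  under eq_bigr do rewrite mulrA.
  apply: Mgen_snd => p pl; rewrite -(mulgV g).
  by apply: (SgM Hg hs); case: (Hl p pl) => ? _.
exact: (Mgen_catr _ (HD h hL s hs)).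
Qed.

Lemma left_artinian_S : left_artinian_on R -> finite_support Sg -> left_artinian S.
Proof.
move=> HR [l0 Hl0] I HI Hd.
have [D HD] := Mgen_comp (undup l0).
have HM : forall x, Mgen D x.
  move=> x; rewrite (@proj_sum_any _ _ _ Hg x (undup l0) (undup_uniq _)); last first.
    move=> h; rewrite mem_undup => hl; apply: NNPP => nz; apply/negP: hl.
    by rewrite Hl0 //; exists (proj Hg h x); split => //; apply: proj_Sg.
  by apply: Mgen_sum => h hl; apply: (HD h) => //; apply: proj_Sg.
apply: (dcc_Mgen HR (D := D)) => // n.
by have [_ I0 IB IM] := HI n; split => // r x _; apply: (IM).
Qed.

End Dir.

Section TF.
Variable G : groupType.
Hypothesis Htf : torsion_free G.

Lemma pow_inj (k : G) : k != 1%g -> injective (fun m : nat => (k ^+ m)%g).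
Proof.
move=> k1.
have H : forall i j, (i <= j)%N -> (k ^+ i)%g = (k ^+ j)%g -> i = j.
  move=> i j ij e; move: e; rewrite -(subnKC ij) expgnDr.
  rewrite -{1}[(k ^+ i)%g]mulg1 => /mulgI /esym e.
  case E: (j - i)%N => [|d]; first by rewrite addn0.
  by rewrite E in e; move: (Htf (ltn0Sn d) e) => /eqP; rewrite (negbTE k1).
move=> i j /= e; case: (leqP i j) => ij; first exact: H.
by apply/esym/H => //; apply: ltnW.
Qed.

Lemma escape (l : seq G) (h k : G) : k != 1%g -> exists m, (h * k ^+ m)%g \notin l.
Proof.
move=> k1; apply: NNPP => Hn.
have Hall : forall m, (h * k ^+ m)%g \in l.
  by move=> m; apply: NNPP => hm; apply: Hn; exists m; apply/negP.
pose s := [seq (h * k ^+ m)%g | m <- iota 0 (size l).+1].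
have us : uniq s.
  rewrite map_inj_uniq ?iota_uniq // => i j /mulgI; exact: pow_inj.
have sub : {subset s <= l} by move=> g /mapP [m _ ->].
by have := uniq_leq_size us sub; rewrite size_map size_iota ltnn.
Qed.

End TF.

Section LemA.
Variables (G : groupType) (S : nzRingType) (Sg : G -> S -> Prop).
Hypothesis Hg : graded Sg.
Hypothesis Htf : torsion_free G.

Lemma rreg k x d : k != 1%g -> Sg k x -> d * (1 + x) = 0 -> d = 0.
Proof.
move=> k1 hx e.
have E : forall h, proj Hg h d = proj Hg (h * k^-1)%g d * (- x).
  move=> h; have := f_equal (proj Hg h) e.
  rewrite mulrDr mulr1 projD (proj_mulr Hg _ _ hx) proj0 => /eqP.
  by rewrite addr_eq0 mulrN => /eqP.
have E2 : forall m h, proj Hg h d = proj Hg (h * (k^-1) ^+ m)%g d * (- x) ^+ m.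
  elim=> [|m IH] h; first by rewrite expg0 mulg1 expr0 mulr1.
  by rewrite IH E exprS mulrA expgSr mulgA.
apply: (@proj_eq0 _ _ _ Hg d) => h.
have [l [_ Hl _]] := proj_supp Hg d.
have k1' : (k^-1)%g != 1%g by rewrite invg_eq1.
have [m hm] := escape Htf l h k1'.
by rewrite (E2 m) (Hl _ hm) mul0r.
Qed.

Lemma rreg_pow k x d n : k != 1%g -> Sg k x -> d * (1 + x) ^+ n = 0 -> d = 0.
Proof.
move=> k1 hx; elim: n d => [|n IH] d; first by rewrite expr0 mulr1.
by rewrite exprSr mulrA => /(rreg k1 hx) /IH.
Qed.

Lemma linv_nil k x c : k != 1%g -> Sg k x -> c * (1 + x) = 1 -> exists m, x ^+ m = 0.
Proof.
move=> k1 hx e.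
have E : forall h, proj Hg h c + proj Hg (h * k^-1)%g c * x = if h == 1%g then 1 else 0.
  move=> h; have := f_equal (proj Hg h) e.
  by rewrite mulrDr mulr1 projD (proj_mulr Hg _ _ hx) (proj_hom Hg h (one_Sg Hg)).
have E' : forall h, h != 1%g -> proj Hg h c = proj Hg (h * k^-1)%g c * (- x).
  move=> h h1; have := E h; rewrite (negbTE h1) => /eqP.
  by rewrite addr_eq0 mulrN => /eqP.
have [l [_ Hl _]] := proj_supp Hg c.
have k1' : (k^-1)%g != 1%g by rewrite invg_eq1.
have ne1 : forall (g : G) m, g != 1%g -> (g ^+ m.+1)%g != 1%g.
  move=> g m g1; apply/negP => /eqP e1.
  by have := pow_inj Htf g1 (e1 : (g ^+ m.+1)%g = (g ^+ 0)%g).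
have Hneg : forall j m, proj Hg ((k^-1) ^+ m.+1)%g c =
    proj Hg ((k^-1) ^+ (m.+1 + j))%g c * (- x) ^+ j.
  elim=> [|j IH] m; first by rewrite addn0 expr0 mulr1.
  rewrite IH E'; last by apply: ne1.
  by rewrite -mulrA -exprS -expgSr addnS.
have Hn0 : forall m, proj Hg ((k^-1) ^+ m.+1)%g c = 0.
  move=> m; have [j hj] := escape Htf l ((k^-1) ^+ m.+1)%g k1'.
  by rewrite -expgnDr in hj; rewrite (Hneg j) (Hl _ hj) mul0r.
have Hc1 : proj Hg 1%g c = 1.
  have := E 1%g; rewrite eqxx mul1g -[(k^-1)%g]expg1 (Hn0 0%N) mul0r addr0.
  by [].
have Hpos : forall m, proj Hg (k ^+ m)%g c = (- x) ^+ m.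
  elim=> [|m IH]; first by rewrite expg0 expr0.
  rewrite E'; last by apply: ne1.
  by rewrite expgSr mulgK IH exprSr.
have [m hm] := escape Htf l 1%g k1.
exists m; rewrite mul1g in hm.
have := Hpos m; rewrite (Hl _ hm) => /esym e0.
by rewrite -[x]opprK exprNn e0 mulr0.
Qed.

Lemma lemA : left_artinian S -> forall k x, k != 1%g -> Sg k x -> exists m, x ^+ m = 0.
Proof.
move=> HS k x k1 hx; set t := 1 + x.
pose I n y := exists s, y = s * t ^+ n.
have HI : forall n, left_ideal_of (fun _ => True) (I n).
  move=> n; split => //.
  - by exists 0; rewrite mul0r.
  - by move=> a b [s ->] [s' ->]; exists (s - s'); rewrite mulrBl.
  - by move=> r a _ [s ->]; exists (r * s); rewrite mulrA.
have Hd : forall n y, I n.+1 y -> I n y.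
  by move=> n y [s ->]; exists (s * t); rewrite exprS mulrA.
have [N HN] := HS I HI Hd.
have : I N.+1 (t ^+ N) by apply/(HN N.+1 (leqnSn N)); exists 1; rewrite mul1r.
case=> c ec.
have : (1 - c * t) * t ^+ N = 0.
  by rewrite mulrBl mul1r -mulrA -exprS -ec subrr.
move/(rreg_pow k1 hx) => /eqP; rewrite subr_eq0 => /eqP /esym.
exact: (linv_nil k1 hx).
Qed.

Lemma lemB : left_artinian S -> forall k X Y, k != 1%g -> Sg k X -> Y * X * X = X -> X = 0.
Proof.
move=> HS k X Y k1 hX e.
have [m hm] := lemA HS k1 hX.
have H : forall n, Y ^+ n.+1 * X ^+ n.+1 = Y * X.
  elim=> [|n IH]; first by rewrite !expr1.
  rewrite exprSr [X ^+ n.+2]exprS [X ^+ n.+1]exprS -mulrA.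
  by rewrite [Y * (X * _)]mulrA [Y * X * (X * _)]mulrA e -exprS IH.
case: m hm => [|m] hm.
  by move: hm; rewrite expr0 => /eqP; rewrite oner_eq0.
by rewrite -e; have := H m; rewrite hm mulr0 => <-; rewrite mul0r.
Qed.

End LemA.

Section Lift.
Variable S : nzRingType.
Variable R : S -> Prop.
Hypotheses (R1 : R 1) (RB : forall x y, R x -> R y -> R (x - y))
  (RM : forall x y, R x -> R y -> R (x * y)).

Lemma R0 : R 0. Proof. by rewrite -(subrr 1); apply: RB. Qed.
Lemma RN x : R x -> R (- x). Proof. by move=> h; rewrite -sub0r; apply: RB => //; apply: R0. Qed.
Lemma RD x y : R x -> R y -> R (x + y).
Proof. by move=> hx hy; rewrite -[y]opprK; apply: RB => //; apply: RN. Qed.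
Lemma Rnat n : R n%:R.
Proof. by elim: n => [|n IH]; [apply: R0 | rewrite mulrS; apply: RD]. Qed.
Lemma Rint (c : int) : R c%:~R.
Proof.
case: c => n; first by rewrite -pmulrn; apply: Rnat.
by rewrite NegzE mulrNz; apply: RN; rewrite -pmulrn; apply: Rnat.
Qed.

Variable e : S.
Definition cfu : commr_rmorph (intr : int -> S) e := fun a => commr_int e a.
Local Notation ev := (horner_morph cfu).

Lemma evX : ev 'X = e. Proof. exact: horner_morphX. Qed.

Lemma ev_R : R e -> forall p, R (ev p).
Proof.
move=> he; elim/poly_ind => [|p c IH]; first by rewrite rmorph0; apply: R0.
rewrite rmorphD rmorphM /= evX horner_morphC; apply: RD; first by apply: RM.
exact: (Rint c).
Qed.

Fixpoint Pn (n : nat) : {poly int} :=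
  if n is m.+1 then 3%:R * Pn m ^+ 2 - 2%:R * Pn m ^+ 3 else 'X.

Definition Z0 : {poly int} := 'X - 'X ^+ 2.

Lemma Pn_Z n : exists Q, Pn n - Pn n ^+ 2 = Z0 ^+ (2 ^ n) * Q.
Proof.
elim: n => [|n [Q HQ]]; first by exists 1; rewrite mulr1 expn0 expr1.
exists (Q ^+ 2 * (3%:R + 4%:R * (Pn n - Pn n ^+ 2))).
have -> : Pn n.+1 - Pn n.+1 ^+ 2 = (Pn n - Pn n ^+ 2) ^+ 2 * (3%:R + 4%:R * (Pn n - Pn n ^+ 2)).
  by rewrite /=; ring.
by rewrite {1}HQ exprMn expnSr exprM mulrA.
Qed.

Lemma Pn_W n : exists W, Pn n = 'X - Z0 * W.
Proof.
elim: n => [|n [W HW]]; first by exists 0; rewrite mulr0 subr0.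
have [Q HQ] := Pn_Z n.
have e1 : Pn n.+1 = Pn n - (Pn n - Pn n ^+ 2) * (1 - 2%:R * Pn n) by rewrite /=; ring.
have e2 : Z0 ^+ (2 ^ n) = Z0 * Z0 ^+ (2 ^ n).-1.
  by rewrite -exprS prednK // expn_gt0.
exists (W + Z0 ^+ (2 ^ n).-1 * Q * (1 - 2%:R * Pn n)).
by rewrite e1 HQ e2 {1}HW; ring.
Qed.

Lemma Pn_U n : exists U, Pn n = U * 'X.
Proof.
elim: n => [|n [U HU]]; first by exists 1; rewrite mul1r.
exists ((3%:R - 2%:R * Pn n) * Pn n * U).
by rewrite /= -[RHS]mulrA -HU; ring.
Qed.

Lemma lift_idem (J : S -> Prop) N :
  (forall r x, R r -> J x -> J (r * x)) -> R e -> J e ->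
  (e - e * e) ^+ N = 0 -> (forall n, e ^+ n != 0) ->
  exists f, [/\ J f, f * f = f & f != 0].
Proof.
move=> JM he hJ hN hnil.
have evZ : ev Z0 = e - e * e by rewrite /Z0 rmorphB /= rmorphXn /= evX expr2.
exists (ev (Pn N)); split.
- have [U ->] := Pn_U N; rewrite rmorphM /= evX; apply: JM => //; exact: ev_R.
- apply/eqP; rewrite eq_sym -subr_eq0 -expr2; have [Q HQ] := Pn_Z N.
  have -> : ev (Pn N) - ev (Pn N) ^+ 2 = ev (Pn N - Pn N ^+ 2).
    by rewrite rmorphB /= rmorphXn.
  rewrite HQ rmorphM /= rmorphXn /= evZ.
  have le : (N <= 2 ^ N)%N by apply: ltnW; apply: ltn_expl.
  by rewrite -(subnKC le) exprD hN !mul0r.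
- have [W HW] := Pn_W N; rewrite HW rmorphB /= evX rmorphM /= evZ.
  apply/negP; rewrite subr_eq0 => /eqP ee.
  have := hnil N; rewrite {1}ee -evZ.
  have -> : (ev Z0 * ev W) ^+ N = ev (Z0 ^+ N * W ^+ N).
    by rewrite -exprMn rmorphXn /= rmorphM.
  by rewrite rmorphM /= rmorphXn /= evZ hN mul0r eqxx.
Qed.

End Lift.

Section Art.
Variable S : nzRingType.
Variable R : S -> Prop.
Hypotheses (R1 : R 1) (RB : forall x y, R x -> R y -> R (x - y))
  (RM : forall x y, R x -> R y -> R (x * y)).
Hypothesis HR : left_artinian_on R.
Let Rz : R 0 := R0 R1 RB.
Let Rneg x : R x -> R (- x) := @RN S R R1 RB x.

Definition nilpI (L : S -> Prop) := exists N, forall xs : seq S, size xs = N ->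
  (forall x, x \in xs -> L x) -> \prod_(x <- xs) x = 0.

Lemma prod_nseq (z : S) n : \prod_(x <- nseq n z) x = z ^+ n.
Proof. by elim: n => [|n IH]; rewrite ?big_nil ?expr0 //= big_cons IH exprS. Qed.

Lemma dcc_min (F : (S -> Prop) -> Prop) L0 : F L0 -> (forall L, F L -> left_ideal_of R L) ->
  exists L, F L /\ forall L', F L' -> (forall x, L' x -> L x) -> forall x, L x -> L' x.
Proof.
move=> FL0 HF; apply: NNPP => Hno.
have step : forall L, exists L', F L -> [/\ F L', (forall x, L' x -> L x) & exists x, L x /\ ~ L' x].
  move=> L; case: (classic (F L)) => FL; last by exists L.
  have : ~ (forall L', F L' -> (forall x, L' x -> L x) -> forall x, L x -> L' x).
    by move=> H; apply: Hno; exists L.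
  move=> /not_all_ex_not [L' HL']; exists L' => _.
  case: (classic (F L')) => FL'; last by exfalso; apply: HL'.
  case: (classic (forall x, L' x -> L x)) => sub; last by exfalso; apply: HL'.
  split => //; apply: NNPP => hn; apply: HL' => _ _ x Lx.
  by apply: NNPP => nL'; apply: hn; exists x.
pose st L := sval (constructive_indefinite_description _ (step L)).
have Hst : forall L, F L -> [/\ F (st L), (forall x, st L x -> L x) & exists x, L x /\ ~ st L x].
  by move=> L; rewrite /st; case: (constructive_indefinite_description _ _) => L' /= H; apply: H.
pose c n := iter n st L0.
have Fc : forall n, F (c n) by elim=> [|n IH] //=; have [] := Hst _ IH.
have [N HN] := @HR c (fun n => HF _ (Fc n)) (fun n x => (let: And3 _ h _ := Hst _ (Fc n) in h x)).
have [_ _ [x [hx nx]]] := Hst _ (Fc N).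
by apply: nx; apply/(HN N.+1 (leqnSn N)).
Qed.

Lemma pair_prod (J0 : S -> Prop) N xs : size xs = (N + N)%N -> (forall x, x \in xs -> J0 x) ->
  exists ys, [/\ size ys = N, (forall y, y \in ys -> prod2 J0 J0 y) &
                 \prod_(x <- xs) x = \prod_(y <- ys) y].
Proof.
elim: N xs => [|N IH] xs.
  by rewrite addn0 => /size0nil -> _; exists [::].
case: xs => [|a [|b xs]] hs H; [by move: hs; rewrite /= addSn | by move: hs; rewrite /= addSn addnS | ].
have hs' : size xs = (N + N)%N by move: hs; rewrite /= addSn addnS => -[].
have H' : forall x, x \in xs -> J0 x by move=> x hx; apply: H; rewrite !inE hx !orbT.
have [ys [hy1 hy2 hy3]] := IH xs hs' H'.
exists (a * b :: ys); split => /=.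
- by rewrite hy1.
- move=> y; rewrite inE => /orP [/eqP -> | /hy2 //].
  by apply: prod2_single; apply: H; rewrite !inE eqxx ?orbT.
- by rewrite !big_cons hy3 mulrA.
Qed.

Lemma nonnil_idem J : left_ideal_of R J -> ~ nilpI J ->
  exists f, [/\ J f, f * f = f & f != 0].
Proof.
move=> HJ nJ.
pose F1 L := [/\ left_ideal_of R L, forall x, L x -> J x & ~ nilpI L].
have [J0 [[HJ0 J0J nJ0] minJ0]] := @dcc_min F1 J (And3 HJ (fun _ h => h) nJ) (fun L h => let: And3 a _ _ := h in a).
have [J0R J00 J0B J0M] := HJ0.
have J0D : forall x y, J0 x -> J0 y -> J0 (x + y) by move=> x y hx hy; apply: (ideal_add HJ0).
pose J2 := prod2 J0 J0.
have J2J0 : forall x, J2 x -> J0 x.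
  apply: prod2_ind => //; move=> a b ha hb; apply: J0M => //; exact: J0R.
have HJ2 : left_ideal_of R J2.
  split.
  - by move=> x /J2J0 /J0R.
  - exact: prod2_0.
  - move=> x y hx hy; apply: prod2_add => //; rewrite -mulN1r; apply: prod2_mull => // a ha.
    by apply: J0M => //; apply: Rneg.
  - by move=> r x hr hx; apply: prod2_mull => // a ha; apply: J0M.
have nJ2 : ~ nilpI J2.
  move=> [N HN]; apply: nJ0; exists (N + N)%N => xs hs hxs.
  have [ys [h1 h2 ->]] := pair_prod hs hxs.
  by apply: HN.
have J0J2 : forall x, J0 x -> J2 x.
  apply: minJ0 => //; split => //; by move=> x /J2J0 /J0J.
have [a [b [ha hb ab]]] : exists a b, [/\ J0 a, J0 b & a * b != 0].
  apply: NNPP => H; apply: nJ0; exists 2%N => -[|x [|y [|z xs]]] // _ hxs.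
  rewrite !big_cons big_nil mulr1; apply: NNPP => nz; apply: H; exists x, y; split.
  - by apply: hxs; rewrite inE eqxx.
  - by apply: hxs; rewrite !inE eqxx orbT.
  - by apply/eqP.
pose F2 L := [/\ left_ideal_of R L, forall x, L x -> J0 x & exists a b, [/\ J0 a, L b & a * b != 0]].
have [L0 [[HL0 L0J0 [a0 [b0 [ha0 hb0 ab0]]]] minL0]] :=
  @dcc_min F2 J0 (And3 HJ0 (fun _ h => h) (ex_intro _ a (ex_intro _ b (And3 ha hb ab))))
    (fun L h => let: And3 a _ _ := h in a).
have [L0R L00 L0B L0M] := HL0.
pose L' y := exists z, J0 z /\ y = z * b0.
have HL' : left_ideal_of R L'.
  split.
  - by move=> y [z [hz ->]]; apply: RM; [apply: J0R | apply: J0R; apply: L0J0].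
  - by exists 0; rewrite mul0r.
  - by move=> x y [z [hz ->]] [z' [hz' ->]]; exists (z - z'); split; [apply: J0B | rewrite mulrBl].
  - by move=> r x hr [z [hz ->]]; exists (r * z); split; [apply: J0M | rewrite mulrA].
have L'L0 : forall y, L' y -> L0 y.
  by move=> y [z [hz ->]]; apply: L0M => //; apply: J0R.
have FL' : F2 L'.
  split => //; first by move=> y /L'L0 /L0J0.
  have [l [Hl ea]] := J0J2 _ ha0.
  have : \sum_(p <- l) p.1 * (p.2 * b0) != 0.
    have e1 : a0 * b0 = \sum_(p <- l) p.1 * (p.2 * b0).
      by rewrite ea mulr_suml; apply: eq_bigr => p _; rewrite mulrA.
    by rewrite -e1.
  move=> nz; have : ~ (forall p, p \in l -> p.1 * (p.2 * b0) = 0).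
    by move=> H; move: nz; rewrite big1_seq ?eqxx // => p /andP [_ /H].
  move=> /not_all_ex_not [p /(imply_to_and (p \in l)) [pl hp]].
  have [h1 h2] := Hl p pl.
  exists p.1, (p.2 * b0); split => //; first by exists p.2.
  by apply/eqP.
have [e [he eb]] : L' b0 by apply: minL0.
have b00 : b0 != 0 by apply: contra ab0 => /eqP ->; rewrite mulr0.
pose K y := J0 y /\ y * b0 = 0.
have HK : left_ideal_of R K.
  split.
  - by move=> y [/J0R].
  - by split; [ | rewrite mul0r].
  - by move=> x y [hx ex] [hy ey]; split; [apply: J0B | rewrite mulrBl ex ey subrr].
  - by move=> r x hr [hx ex]; split; [apply: J0M | rewrite -mulrA ex mulr0].
have nilK : nilpI K.
  apply: NNPP => nK.
  have := minJ0 K (And3 HK (fun y hy => J0J _ (proj1 hy)) nK) (fun y hy => proj1 hy) e he.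
  by case=> _ ebz; move: b00; rewrite eb ebz eqxx.
have [N HN] := nilK.
have ez : (e - e * e) ^+ N = 0.
  rewrite -prod_nseq; apply: HN; first by rewrite size_nseq.
  move=> x /nseqP [-> _]; split.
    by apply: J0B => //; apply: J0M => //; apply: J0R.
  by rewrite mulrBl -mulrA -eb -eb subrr.
have enil : forall n, e ^+ n != 0.
  move=> n; apply/negP => /eqP en.
  have : e ^+ n * b0 = b0.
    by elim: n {en} => [|n IH]; rewrite ?expr0 ?mul1r // exprSr -mulrA -eb.
  by rewrite en mul0r => /esym /eqP; apply/negP.
have [f [Jf ff f0]] := lift_idem R1 RB RM (J := J0) J0M (J0R _ he) he ez enil.
by exists f; split => //; apply: J0J.
Qed.

End Art.

Section Loc.
Variable S : nzRingType.
Variable R : S -> Prop.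
Hypotheses (R1 : R 1) (RB : forall x y, R x -> R y -> R (x - y))
  (RM : forall x y, R x -> R y -> R (x * y)).
Hypothesis HR : left_artinian_on R.
Let Rz : R 0 := R0 R1 RB.
Let RD x y : R x -> R y -> R (x + y) := @RD S R R1 RB x y.
Let Rneg x : R x -> R (- x) := @RN S R R1 RB x.

Variable e0 : S.
Hypotheses (Re0 : R e0) (e0e0 : e0 * e0 = e0) (e00 : e0 != 0)
  (triv : forall f, R f -> f * f = f -> e0 * f = f -> f * e0 = f -> f = 0 \/ f = e0).

Definition Bc b := [/\ R b, e0 * b = b & b * e0 = b].
Definition LI b := exists w, Bc w /\ w * b = e0.

Lemma claimN b : Bc b -> (exists n, b ^+ n = 0) \/ LI b.
Proof.
move=> [Rb e0b be0].
case: (classic (exists n, b ^+ n = 0)) => [h|h]; [by left | right].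
pose J y := exists r, R r /\ y = r * b.
have HJ : left_ideal_of R J.
  split.
  - by move=> y [r [hr ->]]; apply: RM.
  - by exists 0; split => //; rewrite mul0r.
  - by move=> x y [r [hr ->]] [r' [hr' ->]]; exists (r - r'); split; [apply: RB | rewrite mulrBl].
  - by move=> r x hr [r' [hr' ->]]; exists (r * r'); split; [apply: RM | rewrite mulrA].
have nJ : ~ nilpI J.
  move=> [N HN]; apply: h; exists N; rewrite -prod_nseq; apply: HN; first by rewrite size_nseq.
  by move=> x /nseqP [-> _]; exists 1; rewrite mul1r.
have [f [[r [hr ef]] ff f0]] := nonnil_idem R1 RB RM HR HJ nJ.
have fe0 : f * e0 = f by rewrite ef -mulrA be0.
pose g := e0 * f.
have Rg : R g by apply: RM => //; rewrite ef; apply: RM.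
have gg : g * g = g by rewrite /g -mulrA [f * (e0 * f)]mulrA fe0 ff.
have e0g : e0 * g = g by rewrite /g mulrA e0e0.
have ge0 : g * e0 = g by rewrite /g -mulrA fe0.
have g0 : g != 0.
  apply/negP => /eqP g0; move: f0; rewrite -ff -{1}fe0 -mulrA -/g g0 mulr0 eqxx.
  by [].
case: (triv Rg gg e0g ge0) => [gz|gE]; first by move: g0; rewrite gz eqxx.
exists (e0 * r * e0); split.
  split.
  - by apply: RM => //; apply: RM.
  - by rewrite !mulrA e0e0.
  - by rewrite -mulrA e0e0.
by rewrite -mulrA e0b -mulrA -ef.
Qed.

Lemma Bc0 : Bc 0. Proof. by split; rewrite ?mulr0 ?mul0r. Qed.
Lemma BcB x y : Bc x -> Bc y -> Bc (x - y).
Proof.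
by move=> [h1 h2 h3] [h4 h5 h6]; split; [apply: RB | rewrite mulrBr h2 h5 | rewrite mulrBl h3 h6].
Qed.
Lemma BcD x y : Bc x -> Bc y -> Bc (x + y).
Proof. by move=> hx hy; rewrite -[y]opprK -[- y]sub0r; apply: BcB => //; apply: BcB => //; apply: Bc0. Qed.

Lemma NL0 : ~ LI 0.
Proof. by move=> [w [_]]; rewrite mulr0 => /esym /eqP; rewrite (negbTE e00). Qed.

Lemma LIe0 : LI e0.
Proof. by exists e0; split => //; split. Qed.

Lemma geo (u : S) n : (\sum_(i < n) u ^+ i) * (1 - u) = 1 - u ^+ n.
Proof.
elim: n => [|n IH]; first by rewrite big_ord0 mul0r expr0 subrr.
rewrite big_ord_recr /= mulrDl IH mulrBr mulr1 -exprSr.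
by rewrite addrA subrK.
Qed.

Lemma NL_sub b1 b2 : Bc b1 -> Bc b2 -> ~ LI b1 -> ~ LI b2 -> ~ LI (b1 - b2).
Proof.
move=> hb1 hb2 n1 n2 [w [hw e]].
have [Rw e0w we0] := hw; have [Rb1 e0b1 b1e0] := hb1.
pose u := w * b1.
have hu : Bc u by split; [apply: RM | rewrite /u mulrA e0w | rewrite /u -mulrA b1e0].
have nu : ~ LI u.
  move=> [v [hv ev]]; apply: n1; exists (v * w); split; last by rewrite -mulrA.
  have [Rv e0v ve0] := hv.
  by split; [apply: RM | rewrite mulrA e0v | rewrite -mulrA we0].
have [[n hn]|//] := claimN hu.
have [Ru e0u ue0] := hu.
pose s := \sum_(i < n) u ^+ i.
have Rs : R s.
  apply: big_ind => //.
  move=> i _; elim: (nat_of_ord i) => [|k IH]; rewrite ?expr0 // exprS; exact: RM.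
have hs : s * (1 - u) = 1 by rewrite geo hn subr0.
have wb2 : w * b2 = u - e0.
  by move: e; rewrite mulrBr => /eqP; rewrite subr_eq addrC -subr_eq => /eqP <-.
apply: n2; exists (- (e0 * s * e0) * w); split.
  split.
  - by apply: RM => //; apply: Rneg; apply: RM => //; apply: RM.
  - by rewrite mulNr mulrN !mulrA e0e0.
  - by rewrite -[_ * w * e0]mulrA we0.
rewrite -[_ * w * b2]mulrA wb2 mulNr -mulrN opprB.
have e1 : e0 - u = (1 - u) * e0 by rewrite mulrBl mul1r ue0.
have e2 : e0 * (e0 - u) = e0 - u by rewrite mulrBr e0e0 e0u.
rewrite -[_ * _ * (e0 - u)]mulrA e2 e1 mulrA -[e0 * s * (1 - u)]mulrA hs mulr1 e0e0.
by [].
Qed.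

Lemma NL_add b1 b2 : Bc b1 -> Bc b2 -> ~ LI b1 -> ~ LI b2 -> ~ LI (b1 + b2).
Proof.
move=> h1 h2 n1 n2; rewrite -[b2]opprK -[- b2]sub0r; apply: NL_sub => //.
  by apply: BcB => //; apply: Bc0.
by apply: NL_sub => //; [apply: Bc0 | apply: NL0].
Qed.

Lemma NL_sum (I : eqType) (l : seq I) (F : I -> S) :
  (forall i, i \in l -> Bc (F i) /\ ~ LI (F i)) ->
  Bc (\sum_(i <- l) F i) /\ ~ LI (\sum_(i <- l) F i).
Proof.
elim: l => [|a l IH] H; first by rewrite big_nil; split; [apply: Bc0 | apply: NL0].
have [ha na] := H a (mem_head _ _).
have [hl nl] := IH (fun i hi => H i (introT orP (or_intror hi))).
by rewrite big_cons; split; [apply: BcD | apply: NL_add].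
Qed.

End Loc.

Section Fin.
Variables (G : groupType) (S : nzRingType) (Sg : G -> S -> Prop).
Hypothesis Heps : epsilon_strongly_graded Sg.
Hypothesis Htf : torsion_free G.
Let Hg := Hgr Heps.
Local Notation R := (Sg 1%g).
Let R1 : R 1 := one_Sg Hg.
Let RB x y : R x -> R y -> R (x - y) := @SgB _ _ _ Hg 1%g x y.
Let RM x y : R x -> R y -> R (x * y) := @R_mul _ _ _ Heps x y.
Let Rz : R 0 := Sg0 Hg 1%g.
Local Notation ep h := (eps Heps (h^-1)%g).

Lemma Bc_el e0 h y r x : R e0 -> e0 * e0 = e0 -> Sg (h^-1)%g y -> R r -> Sg h x ->
  Bc R e0 (e0 * y * r * x * e0).
Proof.
move=> Re0 ee hy hr hx; split.
- have -> : e0 * y * r * x * e0 = e0 * (y * r * x) * e0 by rewrite !mulrA.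
  apply: RM => //; apply: RM => //.
  rewrite -(mulVg h); apply: (SgM Hg) => //; rewrite -[(h^-1)%g]mulg1; exact: (SgM Hg).
- by rewrite !mulrA ee.
- by rewrite -mulrA ee.
Qed.

Theorem fin_supp : left_artinian S -> finite_support Sg.
Proof.
move=> HS; have HR := left_artinian_R Heps HS.
apply: NNPP => nfs.
have inf1 : forall l : seq G, exists h, h \notin l /\ ep h * 1 != 0.
  move=> l; apply: NNPP => H; apply: nfs; exists l => g [x [hx nx]].
  apply: NNPP => gl; apply: H; exists g; split; first by apply/negP.
  by rewrite mulr1; apply/eqP; exact: (Sg_nz_eps hx nx).
pose F L := exists e, [/\ R e, e * e = e, e != 0,
  (forall y, L y <-> exists r, R r /\ y = r * e) &
  forall l : seq G, exists h, h \notin l /\ ep h * e != 0].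
have HF : forall L, F L -> left_ideal_of R L.
  move=> L [e [Re ee e0 HL _]]; split.
  - by move=> y /HL [r [hr ->]]; apply: RM.
  - by apply/HL; exists 0; split => //; rewrite mul0r.
  - move=> x y /HL [r [hr ->]] /HL [r' [hr' ->]]; apply/HL.
    by exists (r - r'); split; [apply: RB | rewrite mulrBl].
  - move=> r x hr /HL [r' [hr' ->]]; apply/HL.
    by exists (r * r'); split; [apply: RM | rewrite mulrA].
have F1 : F (fun y => exists r, R r /\ y = r * 1).
  by exists 1; split => //; [rewrite mulr1 | apply: oner_neq0].
have [L0 [[e0 [Re0 e0e0 e00 HL0 inf0]] minL]] := dcc_min HR F1 HF.
have triv : forall f, R f -> f * f = f -> e0 * f = f -> f * e0 = f -> f = 0 \/ f = e0.
  move=> f Rf ff e0f fe0; apply: NNPP => /not_or_and [f0 fe].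
  pose g := e0 - f.
  have Rg : R g by apply: RB.
  have gg : g * g = g by rewrite /g mulrBr !mulrBl e0e0 e0f fe0 ff subrr subr0.
  have e0g : e0 * g = g by rewrite /g mulrBr e0e0 e0f.
  have ge0 : g * e0 = g by rewrite /g mulrBl e0e0 fe0.
  have g0 : g != 0 by apply/negP; rewrite /g subr_eq0 => /eqP ef; apply: fe.
  have fg : f * g = 0 by rewrite /g mulrBr fe0 ff subrr.
  have gf : g * f = 0 by rewrite /g mulrBl e0f ff subrr.
  have key : forall p q, R p -> p * p = p -> p != 0 -> p * e0 = p -> e0 * q = q -> q != 0 -> p * q = 0 ->
      ~ (forall l : seq G, exists h, h \notin l /\ ep h * p != 0).
    move=> p q Rp pp p0 pe0 e0q q0 qp infp.
    have Fp : F (fun y => exists r, R r /\ y = r * p) by exists p; split.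
    have sub : forall x, (exists r, R r /\ x = r * p) -> L0 x.
      by move=> x [r [hr ->]]; apply/HL0; exists (r * p); split; [apply: RM | rewrite -mulrA pe0].
    have [r [hr er]] := minL _ Fp sub e0 (proj2 (HL0 e0) (ex_intro _ 1 (conj R1 (esym (mul1r e0))))).
    by move: q0; rewrite -e0q er -mulrA qp mulr0 eqxx.
  have nf := key f g Rf ff (introN eqP f0) fe0 e0g g0 fg.
  have ng := key g f Rg gg g0 ge0 e0f (introN eqP f0) gf.
  move: nf => /not_all_ex_not [lf /not_ex_all_not Hf].
  move: ng => /not_all_ex_not [lg /not_ex_all_not Hg'].
  have [h [hl he]] := inf0 (lf ++ lg).
  move: hl; rewrite mem_cat negb_or => /andP [hf hg].
  have Ef : ep h * f = 0 by apply: NNPP => nz; apply: (Hf h); split => //; apply/eqP.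
  have Eg : ep h * g = 0 by apply: NNPP => nz; apply: (Hg' h); split => //; apply/eqP.
  by move: he; rewrite -[e0](subrK f) -/g mulrDr Ef Eg addr0 eqxx.
have hgood : forall h, ep h * e0 != 0 -> ep h * e0 = e0.
  move=> h hh; have Rep := eps_R Heps (h^-1)%g.
  have ce := eps_central Heps (h^-1)%g Re0.
  have := triv (ep h * e0); case => //.
  - exact: RM.
  - by rewrite -mulrA [e0 * (_ * e0)]mulrA ce -[ep h * e0 * e0]mulrA e0e0 mulrA eps_idem.
  - by rewrite mulrA ce -mulrA e0e0.
  - by rewrite -mulrA e0e0.
  by move/eqP; rewrite (negbTE hh).
have hpair : forall h, ep h * e0 != 0 -> exists p : S * S,
    [/\ Sg h p.1, Sg (h^-1)%g p.2, p.1 * e0 = p.1, e0 * p.2 = p.2 & p.2 * p.1 = e0].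
  move=> h hh; have E := hgood h hh.
  have [l [Hl el]] := epsL_dec Heps (h^-1)%g.
  pose Fp (p : S * S) := e0 * p.1 * 1 * p.2 * e0.
  have HB : forall p, p \in l -> Bc R e0 (Fp p).
    move=> p pl; have [h1 h2] := Hl p pl; rewrite invgK in h2.
    by rewrite /Fp; apply: (Bc_el Re0 e0e0 h1 R1 h2).
  have esum : e0 = \sum_(p <- l) Fp p.
    rewrite -{1}e0e0 -{2}E el mulrA mulr_sumr mulr_suml; apply: eq_bigr => p _.
    by rewrite /Fp mulr1 !mulrA.
  have : ~ (forall p, p \in l -> ~ LI R e0 (Fp p)).
    move=> H; have [_ nl] := NL_sum R1 RB RM HR Re0 e0e0 e00 triv (fun p pl => conj (HB p pl) (H p pl)).
    by apply: nl; rewrite -esum; exact: (LIe0 Re0 e0e0).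
  move=> /not_all_ex_not [p /(imply_to_and (p \in l)) [pl /NNPP [w [[Rw e0w we0] ew]]]].
  have [h1 h2] := Hl p pl; rewrite invgK in h2.
  exists (p.2 * e0, w * p.1); split => /=.
  - by rewrite -[h]mulg1; apply: (SgM Hg).
  - by rewrite -[(h^-1)%g]mul1g; apply: (SgM Hg).
  - by rewrite -mulrA e0e0.
  - by rewrite mulrA e0w.
  by rewrite -[RHS]ew /Fp mulr1 -{1}we0 !mulrA.
have pickex : forall l : seq G, exists h, h \notin l /\ ep h * e0 != 0 := inf0.
pose pick l := sval (constructive_indefinite_description _ (pickex l)).
have Hpick : forall l, pick l \notin l /\ ep (pick l) * e0 != 0.
  by move=> l; rewrite /pick; case: (constructive_indefinite_description _ _).
pose hl n := iter n (fun l => rcons l (pick l)) [::].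
pose hn n := pick (hl n).
have hin : forall n i, (i < n)%N -> hn i \in hl n.
  elim=> [|n IH] i //= lt; rewrite mem_rcons inE.
  by move: lt; rewrite ltnS leq_eqVlt => /orP [/eqP -> | /IH ->]; rewrite ?eqxx ?orbT.
have hdist : forall n i, (i < n)%N -> hn n != hn i.
  move=> n i lt; apply/negP => /eqP e; have := (Hpick (hl n)).1.
  by rewrite -/(hn n) e hin.
pose pn n := sval (constructive_indefinite_description _ (hpair _ (Hpick (hl n)).2)).
have Hpn : forall n, [/\ Sg (hn n) (pn n).1, Sg ((hn n)^-1)%g (pn n).2, (pn n).1 * e0 = (pn n).1,
    e0 * (pn n).2 = (pn n).2 & (pn n).2 * (pn n).1 = e0].
  by move=> n; rewrite /pn; case: (constructive_indefinite_description _ _).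
pose I n r := R r /\ forall i, (i < n)%N -> forall y x, Sg ((hn i)^-1)%g y -> Sg (hn i) x ->
  ~ LI R e0 (e0 * y * r * x * e0).
have HI : forall n, left_ideal_of R (I n).
  move=> n; split.
  - by move=> r [].
  - split => // i _ y x _ _; rewrite mulr0 !mul0r; exact: (NL0 e00).
  - move=> r r' [hr Hr] [hr' Hr']; split; first exact: RB.
    move=> i hi y x hy hx.
    have -> : e0 * y * (r - r') * x * e0 = e0 * y * r * x * e0 - e0 * y * r' * x * e0.
      by rewrite mulrBr !mulrBl.
    apply: (NL_sub R1 RB RM HR Re0 e0e0 triv).
    - exact: (Bc_el Re0 e0e0 hy hr hx).
    - exact: (Bc_el Re0 e0e0 hy hr' hx).
    - exact: (Hr i hi y x hy hx).
    - exact: (Hr' i hi y x hy hx).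
  - move=> r' r hr' [hr Hr]; split; first exact: RM.
    move=> i hi y x hy hx.
    have -> : e0 * y * (r' * r) * x * e0 = e0 * (y * r') * r * x * e0 by rewrite !mulrA.
    apply: (Hr i hi _ x _ hx).
    by rewrite -[X in Sg X _]mulg1; apply: (SgM Hg).
have Hd : forall n x, I n.+1 x -> I n x.
  by move=> n x [hx H]; split => // i hi; apply: H; apply: ltnW.
have [N HN] := HR I HI Hd.
have [hx1 hy1 xe1 ey1 yx1] := Hpn N.
pose rN := (pn N).1 * (pn N).2.
have RrN : R rN by rewrite /rN -(mulgV (hn N)); apply: (SgM Hg).
have IN : I N rN.
  split => // i hi y x hy hx [w [[Rw e0w we0] ew]].
  pose X := (pn N).2 * x * e0.
  pose Y := w * e0 * y * (pn N).1.
  have YX : Y * X = e0 by rewrite -ew /Y /X /rN !mulrA.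
  have e0X : e0 * X = X by rewrite /X !mulrA ey1.
  have k1 : ((hn N)^-1 * hn i)%g != 1%g.
    apply/negP => /eqP e1; have := hdist N i hi; rewrite -[hn i](mulVKg (hn N)) e1 mulg1.
    by rewrite eqxx.
  have hX : Sg ((hn N)^-1 * hn i)%g X.
    by rewrite -[((hn N)^-1 * hn i)%g]mulg1; apply: (SgM Hg) => //; apply: (SgM Hg).
  have X0 : X = 0 by apply: (lemB Hg Htf HS k1 hX (Y := Y)); rewrite YX e0X.
  by move: e00; rewrite -YX X0 mulr0 eqxx.
have := (proj2 (HN N.+1 (leqnSn N) rN) IN).2 N (ltnSn N) _ _ hy1 hx1.
apply; rewrite /rN.
have -> : e0 * (pn N).2 * ((pn N).1 * (pn N).2) * (pn N).1 * e0 =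
   e0 * ((pn N).2 * (pn N).1) * ((pn N).2 * (pn N).1) * e0 by rewrite !mulrA.
by rewrite yx1 !e0e0; exact: (LIe0 Re0 e0e0).
Qed.

End Fin.

Lemma left_main (G : groupType) (S : nzRingType) (Sg : G -> S -> Prop) :
  torsion_free G -> epsilon_strongly_graded Sg ->
  (left_artinian S <-> left_artinian_on (Sg 1%g) /\ finite_support Sg).
Proof.
move=> Htf Heps; split.
  by move=> HS; split; [exact: (left_artinian_R Heps HS) | exact: (fin_supp Heps Htf HS)].
by case=> HR Hf; exact: (left_artinian_S Heps HR Hf).
Qed.

Section Conv.
Variable S : nzRingType.

Lemma ra_conv (P : S -> Prop) : right_artinian_on P <-> left_artinian_on (S := S^c) P.
Proof. by split => H. Qed.

Lemma mulcE (x y : S^c) : x * y = (y : S) * (x : S).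
Proof. by []. Qed.

Lemma sumcE (I : Type) (r : seq I) (F : I -> S) :
  (\sum_(i <- r) (F i : S^c)) = \sum_(i <- r) F i.
Proof. by []. Qed.

Lemma prod2_conv (A B : S -> Prop) x : prod2 (S := S^c) A B x <-> prod2 B A x.
Proof.
split=> [[l [H e]] | [l [H e]]].
  exists [seq (p.2, p.1) | p <- l]; split.
    by move=> p /mapP [q ql ->] /=; have [] := H q ql.
  by rewrite e big_map.
exists [seq ((p.2, p.1) : S^c * S^c) | p <- l]; split.
  by move=> p /mapP [q ql ->] /=; have [] := H q ql.
by rewrite e big_map.
Qed.

Lemma prod3_conv (A B C : S -> Prop) x : prod3 (S := S^c) A B C x <-> prod3 C B A x.
Proof.
split=> [[l [H e]] | [l [H e]]].
  exists [seq ((p.2, p.1.2), p.1.1) | p <- l]; split.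
    by move=> p /mapP [q ql ->] /=; have [] := H q ql.
  rewrite e big_map; apply: eq_bigr => p _ /=; by rewrite !mulcE mulrA.
exists [seq (((p.2, p.1.2), p.1.1) : S^c * S^c * S^c) | p <- l]; split.
  by move=> p /mapP [q ql ->] /=; have [] := H q ql.
rewrite e big_map; apply: eq_bigr => p _ /=; by rewrite !mulcE mulrA.
Qed.

End Conv.

Section Opp.
Variables (G : groupType) (S : nzRingType) (Sg : G -> S -> Prop).
Hypothesis Heps : epsilon_strongly_graded Sg.
Let Hg := Hgr Heps.

Definition Sgc (g : G) (x : S^c) : Prop := Sg (g^-1)%g x.

Lemma graded_c : graded Sgc.
Proof.
split.
- move=> g; split; first exact: (Sg0 Hg).
  by move=> x y; apply: (SgB Hg).
- split.
  + move=> x; have [l [f [ul Hf ex]]] := decomp Hg x.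
    exists [seq (g^-1)%g | g <- l], (fun g => f (g^-1)%g); split.
    * by rewrite map_inj_uniq //; apply: invg_inj.
    * by move=> g; rewrite /Sgc.
    * by rewrite big_map; under eq_bigr do rewrite invgK.
  + move=> l f ul Hf e g gl.
    have := @indep _ _ _ Hg [seq (g^-1)%g | g <- l] (fun h => f (h^-1)%g).
    have ul' : uniq [seq (g^-1)%g | g <- l] by rewrite map_inj_uniq //; apply: invg_inj.
    move=> /(_ ul').
    have H1 : forall h, h \in [seq (g^-1)%g | g <- l] -> Sg h (f (h^-1)%g).
      move=> h /mapP [k kl ->]; rewrite invgK.
      by have := Hf k kl; rewrite /Sgc.
    move=> /(_ H1); rewrite big_map.
    have -> : \sum_(i <- l) f (i^-1^-1)%g = 0 by under eq_bigr do rewrite invgK.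
    by move=> /(_ erefl (g^-1)%g (map_f _ gl)); rewrite invgK.
- move=> g h x y hx hy; rewrite /Sgc invgM mulcE.
  exact: (SgM Hg).
Qed.

Lemma eps_c : epsilon_strongly_graded Sgc.
Proof.
split; first exact: graded_c.
move=> g; split.
  move=> x; rewrite prod3_conv /Sgc.
  exact: (proj1 (proj2 Heps (g^-1)%g) x).
have [u [hu Hu]] := (proj2 (proj2 Heps g)).
exists u; split.
  by apply/prod2_conv; rewrite /Sgc invgK.
move=> x; rewrite prod2_conv /Sgc invgK => /Hu [h1 h2].
by rewrite !mulcE.
Qed.

Lemma fs_c : finite_support Sgc <-> finite_support Sg.
Proof.
split=> [[l Hl] | [l Hl]].
  exists [seq (g^-1)%g | g <- l] => g [x [hx nx]].
  have : (g^-1)%g \in l by apply: Hl; exists x; split => //; rewrite /Sgc invgK.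
  by move=> /(map_f (fun h => (h^-1)%g)); rewrite invgK.
exists [seq (g^-1)%g | g <- l] => g [x [hx nx]].
have : (g^-1)%g \in l by apply: Hl; exists x.
by move=> /(map_f (fun h => (h^-1)%g)); rewrite invgK.
Qed.

End Opp.

Theorem theorem1p2 (G : groupType) (S : nzRingType) (Sg : G -> S -> Prop) :
  torsion_free G -> epsilon_strongly_graded Sg ->
  (left_artinian S <-> left_artinian_on (Sg 1%g) /\ finite_support Sg) /\
  (right_artinian S <-> right_artinian_on (Sg 1%g) /\ finite_support Sg).
Proof.
move=> Htf Heps; split; first exact: left_main.
have := left_main Htf (eps_c Heps).
rewrite fs_c /Sgc invg1 => H.
rewrite /right_artinian !ra_conv.
exact: H.
Qed.
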